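(* Let $q$ be a power of $2$, let $a,b\in\mathbb{F}_q$ with $b\ne0$, and let $n\ge2$ be an integer. Let $r\ge0$ be such that $2^r$ divides $n+1$ but $2^{r+1}$ does not, and let $m\ge 0$ be defined by $n+1=2^r(m+1)$. Assume $r\ge1$. Then $m$ is even. If $m>0$, then $\hat C_n(a,b)$ is LCD if and only if $$a/b\notin\{-1/b\}\cup\{-1/b+\theta^i+\theta^{-i} : 1\le i\le m/2\},$$ where $\theta\in\overline{\mathbb{F}}_q$ is a primitive $(m+1)$-th root of unity. If $m=0$, then $\hat C_n(a,b)$ is LCD if and only if $a\ne 1$.
   Context: For $a,b\in\mathbb{F}_q$ and $n\ge 2$, $\hat T_n(a,b)$ denotes the $n\times n$ symmetric tridiagonal Toeplitz matrix over $\mathbb{F}_q$ with all diagonal entries equal to $a$, all entries on the first super- and sub-diagonals equal to $b$, and all other entries $0$. $\hat C_n(a,b)$ is the $[2n,n]$ linear code over $\mathbb{F}_q$ with generator matrix $[I_n\mid \hat T_n(a,b)]$. A linear code $C$ is LCD if $C\cap C^\perp=\{0\}$ (Euclidean dual). *)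

(* Defs.v *)
From HB Require Import structures.
From mathcomp Require Import all_boot all_order all_algebra all_field.
Set Implicit Arguments. Unset Strict Implicit. Unset Printing Implicit Defensive.
Import GRing.Theory.
Local Open Scope ring_scope.

Definition tridiagT (R : nzRingType) (n : nat) (a b : R) : 'M[R]_n :=
  \matrix_(i < n, j < n)
    if i == j then a
    else if (i.+1 == j :> nat) || (j.+1 == i :> nat) then b else 0.

(* generator matrix [I_n | T_n(a,b)] of hat C_n(a,b) *)
Definition genC (R : nzRingType) (n : nat) (a b : R) : 'M[R]_(n, n + n) :=
  row_mx 1%:M (tridiagT n a b).

(* The linear code spanned by the rows of G is LCD (Euclidean):
   C ∩ C^⊥ = {0}, where v ∈ C^⊥ iff v is orthogonal to every row of G,
   i.e. v *m G^T = 0. *)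
Definition is_LCD (F : fieldType) (k N : nat) (G : 'M[F]_(k, N)) : Prop :=
  forall v : 'rV[F]_N, (v <= G)%MS -> v *m G^T = 0 -> v = 0.

(* Main.v *)
Require Import Defs.
From HB Require Import structures.
From mathcomp Require Import all_boot all_order all_algebra all_field.
From mathcomp Require Import ring zify.
Import GRing.Theory.
Local Open Scope ring_scope.



Fixpoint chebU {R : nzRingType} (z : R) (j : nat) : R :=
  match j with 0 => 0 | 1 => 1 | (j'.+1 as j1).+1 => z * chebU z j1 + chebU z j' end.

Lemma nat_ind2 (P : nat -> Prop) : P 0%N -> P 1%N ->
  (forall j, P j -> P j.+1 -> P j.+2) -> forall j, P j.
Proof.
move=> P0 P1 PS j; suff: P j /\ P j.+1 by case.
by elim: j => [|j [IH1 IH2]]; split => //; apply: PS.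
Qed.

Section U.
Variable R : comNzRingType.
Implicit Types z : R.

Lemma chebU_add z j k :
  chebU z (j + k).+1 = chebU z j.+1 * chebU z k.+1 + chebU z j * chebU z k.
Proof.
elim: j k => [|j IH] k; first by rewrite add0n /= mul1r mul0r addr0.
rewrite addSnnS IH /=.
case: j IH => [|j] IH /=; ring.
Qed.

Variable h2 : (2%:R : R) = 0.

Lemma chebU_double z k : chebU z k.*2 = z * chebU z k ^+ 2.
Proof.
case: k => [|k]; first by rewrite /= expr0n /= mulr0.
have -> : k.+1.*2 = (k + k.+1).+1 by rewrite doubleS -addnn addnS. rewrite chebU_add.
have -> : chebU z k.+2 = z * chebU z k.+1 + chebU z k by [].
have -> : forall x y : R, x * (z * x + y) + y * x = z * x ^+2 + 2%:R * (y * x) by move=> x y; ring.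
by rewrite h2 mul0r addr0.
Qed.

Lemma chebU_odd z k : chebU z k.*2.+1 = (chebU z k.+1 + chebU z k) ^+ 2.
Proof.
rewrite -addnn chebU_add.
have -> : forall x y : R, (x + y) ^+ 2 = x * x + y * y + 2%:R * (x * y) by move=> x y; ring.
by rewrite h2 mul0r addr0.
Qed.

Lemma chebU_pow z r M : chebU z (2 ^ r * M) = z ^+ (2 ^ r - 1) * chebU z M ^+ (2 ^ r).
Proof.
elim: r => [|r IH]; first by rewrite expn0 mul1n subnn expr0 mul1r expr1.
rewrite expnS -mulnA mul2n chebU_double IH exprMn -!exprM mulrA -exprS.
have e : ((2 ^ r - 1) * 2).+1 = (2 * 2 ^ r - 1)%N.
  by have := expn_gt0 2 r; rewrite /=; lia.
by rewrite e mulnC.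
Qed.

End U.



Lemma chebU_rmorph (R S : comNzRingType) (f : {rmorphism R -> S}) z j :
  f (chebU z j) = chebU (f z) j.
Proof.
elim/nat_ind2: j => [|| j IH1 IH2]; first by rewrite rmorph0.
  by rewrite rmorph1.
by rewrite /= rmorphD rmorphM IH1 IH2.
Qed.

Lemma chebU_horner (R : comNzRingType) (z : R) j : (chebU 'X j).[z] = chebU z j.
Proof.
elim/nat_ind2: j => [|| j IH1 IH2]; first by rewrite hornerC.
  by rewrite hornerC.
by rewrite /= hornerD hornerM hornerX IH1 IH2.
Qed.



Lemma chebU_size (R : comNzRingType) j :
  size (chebU ('X : {poly R}) j) = j /\ ((0 < j)%N -> chebU ('X : {poly R}) j \is monic).
Proof.
elim/nat_ind2: j => [|| j [s1 m1] [s2 m2]]; first by rewrite /= size_poly0.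
  by rewrite /= size_poly1 monic1.
have mX : ('X * chebU 'X j.+1 : {poly R}) \is monic.
  by rewrite monicMl ?monicX // m2.
have sX : size ('X * chebU ('X : {poly R}) j.+1) = j.+2.
  by rewrite mulrC size_mulX ?s2 // -size_poly_eq0 s2.
have lt : leq (size (chebU ('X : {poly R}) j)).+1 (size ('X * chebU 'X j.+1 : {poly R})).
  by rewrite sX s1.
split; first by rewrite /= size_addl // sX.
move=> _ /=; rewrite monicE lead_coefDl //; exact: mX.
Qed.

Section Trig.
Variable L : fieldType.
Variable h2 : (2%:R : L) = 0.

Lemma chebU_trig (t : L) j : t != 0 ->
  (t + t^-1) * chebU (t + t^-1) j = t ^+ j + t ^- j.
Proof.
move=> t0; elim/nat_ind2: j => [|| j IH1 IH2].
- by rewrite /= mulr0 expr0 invr1 -mulr2n -mulr_natr mul1r h2.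
- by rewrite /= mulr1 expr1.
have -> : chebU (t + t^-1) j.+2 = (t + t^-1) * chebU (t + t^-1) j.+1 + chebU (t + t^-1) j by [].
rewrite mulrDr mulrCA IH1 IH2 !exprS.
set X := t ^+ j.
have X0 : X != 0 by rewrite expf_neq0.
have -> : (t + t^-1) * (t * X + (t * X)^-1) + (X + X^-1) =
   t * (t * X) + (t * (t * X))^-1 + 2%:R * (X + X^-1).
  by field; rewrite t0 X0.
by rewrite h2 mul0r addr0.
Qed.
End Trig.



Lemma sum_if_eq (R : nmodType) N (H : nat -> R) k :
  \sum_(i < N) (if (i : nat) == k then H i else 0) = if (k < N)%N then H k else 0.
Proof.
elim: N => [|N IH]; first by rewrite big_ord0.
rewrite big_ord_recr /= IH.
case: (ltngtP k N) => [lt|gt|->]; rewrite ?eqxx.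
- by rewrite addr0 ltnS ltnW.
- by rewrite addr0 ltnS leqNgt gt.
- by rewrite add0r ltnSn.
Qed.

Section Ker.
Variable F : fieldType.
Variable h2 : (2%:R : F) = 0.
Variables (n : nat) (c b : F).
Hypothesis hb : b != 0.
Local Notation N := n.+1.

Definition wv (u : 'rV[F]_N) (i : nat) : F := if (i < N)%N then u 0 (inord i) else 0.
Definition gv (u : 'rV[F]_N) (i : nat) : F := if i is i'.+1 then wv u i' else 0.

Lemma coefE (i j : nat) (x : F) :
  x * (if i == j then c else if (i.+1 == j) || (j.+1 == i) then b else 0) =
   (if i == j then c * x else 0) +
   (if i == j.-1 then (if (0 < j)%N then b * x else 0) else 0) +
   (if i == j.+1 then b * x else 0).
Proof.
case: (ltngtP i j) => [lt|gt|<-].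
- have -> : (j.+1 == i) = false by lia.
  have -> : (i == j.+1) = false by lia.
  rewrite orbF addr0 add0r.
  case: (boolP (i.+1 == j)) => h.
  + have -> : (i == j.-1) = true by lia.
    have -> : (0 < j)%N = true by lia.
    by rewrite mulrC.
  + have -> : (i == j.-1) = false by lia.
    by rewrite mulr0.
- have -> : (i.+1 == j) = false by lia.
  have -> : (i == j.-1) = false by lia.
  rewrite add0r add0r [i == j.+1]eq_sym; case: (j.+1 == i) => /=; last by rewrite mulr0.
  by rewrite mulrC.
- have -> : (i == i.+1) = false by lia.
  have -> : (if i == i.-1 then (if (0 < i)%N then b * x else 0) else 0) = 0.
    by case: i => [|i] //=; have -> : (i.+1 == i) = false by lia.
  by rewrite addr0 addr0 mulrC.
Qed.

Lemma mulT_entry (u : 'rV[F]_N) (j : 'I_N) :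
  (u *m tridiagT N c b) 0 j = b * gv u j + c * gv u j.+1 + b * gv u j.+2.
Proof.
rewrite !mxE.
have e : forall i : 'I_N, u 0 i * tridiagT N c b i j =
   (if (i : nat) == j then c * wv u i else 0) +
   (if (i : nat) == j.-1 then (if (0 < j)%N then b * wv u i else 0) else 0) +
   (if (i : nat) == j.+1 then b * wv u i else 0).
  move=> i; rewrite mxE /wv ltn_ord inord_val -[i == j]val_eqE /=.
  exact: coefE.
rewrite (eq_bigr _ (fun i _ => e i)) !big_split /=.
rewrite (sum_if_eq _ _ (fun i => c * wv u i)).
rewrite (sum_if_eq _ _ (fun i => if (0 < j)%N then b * wv u i else 0)).
rewrite (sum_if_eq _ _ (fun i => b * wv u i)).
rewrite ltn_ord; clear e.
have -> : (if (j.+1 < N)%N then b * wv u j.+1 else 0) = b * wv u j.+1.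
  by case: ifP => // h; rewrite /wv h mulr0.
case: j => [[|j] hj] /=; first by rewrite /gv mulr0 addr0 add0r.
by rewrite (ltn_trans (ltnSn j) hj) [c * _ + _]addrC.
Qed.

Lemma ker_iff :
  (exists u : 'rV[F]_N, u != 0 /\ u *m tridiagT N c b = 0) <-> chebU (c / b) N.+1 = 0.
Proof.
split.
- move=> [u [nz E]].
  have rec : forall j, (j < N)%N -> gv u j.+2 = (c / b) * gv u j.+1 + gv u j.
    move=> j lj; have H0 : b * gv u j + c * gv u j.+1 + b * gv u j.+2 = 0.
      by rewrite -(mulT_entry u (Ordinal lj)) E mxE.
    have -> : gv u j.+2 = (c / b * gv u j.+1 + gv u j) +
       (b * gv u j + c * gv u j.+1 + b * gv u j.+2) / b - 2%:R * (c / b * gv u j.+1 + gv u j).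
      by field.
    by rewrite H0 h2 mul0r mul0r subr0 addr0.
  have gall : forall j, (j <= N.+1)%N -> gv u j = gv u 1 * chebU (c / b) j.
    elim/nat_ind2 => [||j IH1 IH2] hj; first by rewrite /= mulr0.
      by rewrite /= mulr1.
    rewrite rec; last by lia.
    rewrite IH1; last by lia.
    rewrite IH2; last by lia.
    by rewrite /= mulrDr mulrCA.
  have gN : gv u N.+1 = 0 by rewrite /= /wv ltnn.
  case: (eqVneq (chebU (c / b) N.+1) 0) => // hU.
  exfalso; move/negP: nz; apply; apply/eqP.
  have g1 : gv u 1 = 0.
    by move: gN; rewrite gall // => /eqP; rewrite mulf_eq0 (negbTE hU) orbF => /eqP.
  apply/rowP => i; rewrite mxE.
  have := gall i.+1; rewrite g1 mul0r /= /wv ltn_ord inord_val => -> //.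
  by rewrite ltnS ltnW.
- move=> hU; exists (\row_(i < N) chebU (c / b) i.+1); split.
    apply/eqP => /rowP /(_ ord0); rewrite !mxE /= => /eqP; by rewrite oner_eq0.
  apply/rowP => j; rewrite mulT_entry mxE.
  have gU : forall i, (i <= N.+1)%N -> gv (\row_(i < N) chebU (c / b) i.+1) i = chebU (c / b) i.
    case=> [|i] hi; first by []. rewrite [gv _ _]/= /wv.
    case: (ltnP i N) => hiN; first by rewrite mxE inordK.
    have -> : i = N by lia.
    by rewrite hU.
  have jN := ltn_ord j.
  rewrite !gU; try lia.
  have -> : chebU (c / b) j.+2 = c / b * chebU (c / b) j.+1 + chebU (c / b) j by [].
  set x := chebU (c / b) j; set y := chebU (c / b) j.+1.
  have -> : b * x + c * y + b * (c / b * y + x) = 2%:R * (b * x + c * y) by field.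
  by rewrite h2 mul0r.
Qed.

End Ker.



Section LCD.
Variable F : fieldType.
Variable h2 : (2%:R : F) = 0.

Lemma tridiag_tr n (a b : F) : (tridiagT n a b)^T = tridiagT n a b.
Proof.
apply/matrixP => i j; rewrite !mxE [j == i]eq_sym orbC.
by rewrite [(j.+1 == i)%N]eq_sym [(i.+1 == j)%N]eq_sym.
Qed.

Lemma tridiag_add1 n (a b : F) : 1%:M + tridiagT n a b = tridiagT n (a + 1) b.
Proof.
apply/matrixP => i j; rewrite !mxE; case: eqP => _ /=; first by rewrite addrC.
by rewrite add0r.
Qed.

Lemma genC_gram n (a b : F) :
  genC n a b *m (genC n a b)^T = tridiagT n (a + 1) b *m tridiagT n (a + 1) b.
Proof.
rewrite /genC tr_row_mx mul_row_col trmx1 tridiag_tr mul1mx -tridiag_add1.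
rewrite mulmxDl !mulmxDr !mul1mx mulmx1.
set T := tridiagT n a b.
rewrite -addrA [T + (T + _)]addrA.
have -> : T + T = 0.
  by apply/matrixP => i j; rewrite !mxE -mulr2n -mulr_natr h2 mulr0.
by rewrite add0r.
Qed.

Lemma LCD_ker n (a b : F) :
  is_LCD (genC n a b) <-> (forall u : 'rV[F]_n, u *m tridiagT n (a + 1) b = 0 -> u = 0).
Proof.
split.
- move=> H u uA.
  have : u *m genC n a b = 0.
    apply: H; first exact: submxMl.
    rewrite -mulmxA genC_gram mulmxA (_ : u *m _ = 0) ?mul0mx //; exact: uA.
  by rewrite /genC mul_mx_row mulmx1 => /eqP; rewrite row_mx_eq0; case/andP => /eqP.
- move=> K v /submxP [u ->]; rewrite -mulmxA genC_gram mulmxA => /K /K ->.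
  by rewrite mul0mx.
Qed.

Lemma LCD_iff n (a b : F) (hb : b != 0) :
  is_LCD (genC n.+1 a b) <-> chebU ((a + 1) / b) n.+2 != 0.
Proof.
have KI := @ker_iff F h2 n (a + 1) b hb.
rewrite LCD_ker; split.
- move=> K; apply/negP => /eqP /KI [u [nz uA]].
  by move/eqP: nz; apply; apply: K.
- move=> nE u uA; case: (eqVneq u 0) => // nz.
  by move/negP: nE; case; apply/eqP; apply/KI; exists u.
Qed.
End LCD.



Section Roots.
Variable L : fieldType.
Variable h2 : (2%:R : L) = 0.
Variable k : nat.
Variable theta : L.
Hypothesis prim : (k.*2.+1).-primitive_root theta.

Let cc (i : nat) := theta ^+ i + theta ^- i.

Lemma theta_neq0 : theta != 0.
Proof.
apply/eqP => t0; have := prim_expr_order prim; rewrite t0 expr0n /=.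
by move/eqP; rewrite eq_sym oner_eq0.
Qed.

Lemma cc_inj i j : (i <= k)%N -> (j <= k)%N -> cc i = cc j -> i = j.
Proof.
move=> ik jk; rewrite /cc => E.
have x0 : theta ^+ i != 0 by rewrite expf_neq0 // theta_neq0.
have y0 : theta ^+ j != 0 by rewrite expf_neq0 // theta_neq0.
have : (theta ^+ i - theta ^+ j) * (1 - (theta ^+ i * theta ^+ j)^-1) = 0.
  have -> : (theta ^+ i - theta ^+ j) * (1 - (theta ^+ i * theta ^+ j)^-1) =
     (theta ^+ i + theta ^- i) - (theta ^+ j + theta ^- j).
    by field; rewrite x0 y0.
  by rewrite E subrr.
move/eqP; rewrite mulf_eq0 => /orP [].
  rewrite subr_eq0 (eq_prim_root_expr prim) => /eqP.
  by rewrite !modn_small //; lia.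
rewrite subr_eq0 eq_sym invr_eq1 -exprD -(expr0 theta) (eq_prim_root_expr prim).
rewrite mod0n modn_small; last lia.
lia.
Qed.

Lemma cc_root i : (1 <= i <= k)%N -> chebU (cc i) k.+1 + chebU (cc i) k = 0.
Proof.
move=> /andP [i1 ik].
have t0 : theta ^+ i != 0 by rewrite expf_neq0 // theta_neq0.
have c0 : cc i != 0.
  apply/eqP => E; have : cc i = cc 0 by rewrite E /cc expr0 invr1 -mulr2n -mulr_natr mul1r h2.
  move=> H; have := @cc_inj i 0 ik (leq0n k) H; lia.
have := @chebU_trig L h2 _ (k.*2.+1) t0.
rewrite -exprM mulnC exprM (prim_expr_order prim) expr1n invr1 -mulr2n -mulr_natr mul1r h2.
move/eqP; rewrite mulf_eq0 (negbTE c0) orFb (@chebU_odd L h2) expf_eq0 andTb -/(cc i).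
move=> H; exact: (eqP H).
Qed.

Lemma roots_iff z :
  chebU z (k.*2.+1) != 0 <-> (forall i, (1 <= i <= k)%N -> z != cc i).
Proof.
rewrite (@chebU_odd L h2) expf_eq0 andTb; split.
- move=> W i hi; apply/eqP => zE; move: W; rewrite zE cc_root //.
  by rewrite eqxx.
- move=> H; apply/negP => /eqP W.
  set p : {poly L} := chebU 'X k.+1 + chebU 'X k.
  have [s1 _] := chebU_size L k.+1.
  have [s0 _] := chebU_size L k.
  have sp : size p = k.+1 by rewrite /p size_polyDl // s1 s0.
  have p0 : p != 0 by rewrite -size_poly_eq0 sp.
  have pE : forall x, p.[x] = chebU x k.+1 + chebU x k.
    by move=> x; rewrite /p hornerD !chebU_horner.
  have := max_poly_roots (rs := z :: map cc (iota 1 k)) p0.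
  rewrite /= sp size_map size_iota ltnn.
  have -> : root p z by rewrite /root pE W.
  have -> : all (root p) [seq cc i | i <- iota 1 k].
    apply/allP => x /mapP [i]; rewrite mem_iota => hi ->.
    rewrite /root pE cc_root //; apply/andP; split; lia.
  have -> : z \notin [seq cc i | i <- iota 1 k].
    apply/mapP => [[i]]; rewrite mem_iota => hi zE.
    have hi2 : (1 <= i <= k)%N by apply/andP; split; lia.
    by have := H i hi2; rewrite zE eqxx.
  rewrite map_inj_in_uniq ?iota_uniq; first by move/(_ isT isT).
  move=> i j; rewrite !mem_iota => hi hj; apply: cc_inj; lia.
Qed.

End Roots.



Theorem theorem2p9 (F : finFieldType) (hchar : (2%N \in [pchar F])%N)
  (a b : F) (hb : b != 0) (n : nat) (hn : (2 <= n)%N)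
  (r m : nat) (hr1 : (2 ^ r %| n.+1)%N) (hr2 : ~~ (2 ^ r.+1 %| n.+1)%N)
  (hm : n.+1 = (2 ^ r * m.+1)%N) (hr : (1 <= r)%N) :
  ~~ odd m /\
  ((0 < m)%N ->
     forall (L : fieldType) (f : {rmorphism F -> L}) (theta : L),
       (m.+1).-primitive_root theta ->
       (is_LCD (genC n a b) <->
          (f (a / b) != f (- 1 / b) /\
           forall i : nat, (1 <= i <= m./2)%N ->
             f (a / b) != f (- 1 / b) + theta ^+ i + theta ^- i))) /\
  (m = 0%N -> (is_LCD (genC n a b) <-> a != 1)).
Proof.
have h2F : (2%:R : F) = 0 := pcharf0 hchar.
have modd : ~~ odd m.
  apply/negP => om; move/negP: hr2; apply.
  by rewrite hm expnS [(2 * _)%N]mulnC dvdn_pmul2l ?expn_gt0 // dvdn2 /= om.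
split => //.
have r0 : (0 < 2 ^ r - 1)%N.
  have : (2 <= 2 ^ r)%N by rewrite -{1}(expn1 2) leq_exp2l.
  lia.
case: n hn hr1 hr2 hm => [|n] // hn hr1 hr2 hm.
have LI := @LCD_iff F h2F n a b hb.
rewrite hm in LI.
set y := (a + 1) / b in LI.
split.
- move=> m0 L f theta prim.
  have p2 : (0 < 2 ^ r)%N by rewrite expn_gt0.
  have h2L : (2%:R : L) = 0 by rewrite -(rmorph_nat f) h2F rmorph0.
  rewrite LI -(fmorph_eq0 f) chebU_rmorph (@chebU_pow L h2L) mulf_eq0 !expf_eq0 r0 p2 !andTb.
  have mE : m = (m./2).*2 by rewrite -[LHS]odd_double_half (negbTE modd).
  rewrite mE in prim; rewrite {1}mE.
  have RI := @roots_iff L h2L _ _ prim (f y).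
  have fyE : f y = f (a / b) - f (- 1 / b).
    by rewrite -rmorphB /y mulNr opprK mulrDl.
  have sE : forall x z c : L, (x == z + c) = (x - z == c) by move=> x z c; rewrite subr_eq addrC.
  rewrite negb_or; split.
  + case/andP => fy0 U0; split; first by rewrite -subr_eq0 -fyE.
    move=> i hi; rewrite -addrA sE -fyE; exact: (proj1 RI U0).
  + case => h0 hi; apply/andP; split; first by rewrite fyE subr_eq0.
    apply/(proj2 RI) => i hi'; rewrite fyE -sE addrA; exact: hi.
- move=> m0; rewrite LI m0 (@chebU_pow F h2F) (_ : chebU y 1 = 1) // expr1n mulr1 expf_eq0 r0 andTb.
  rewrite /y mulf_eq0 invr_eq0 (negbTE hb) orbF addr_eq0 (oppr_pchar2 hchar).
  by [].
Qed.
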